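(* For each $n\in\mathbb{N}$ let $A_n\subseteq\mathcal{R}$ be L-measurable, and suppose $\lim_{N\to\infty}M\big(\bigcap_{n=1}^N A_n\big)$ exists in $\mathcal{R}$. Let $X\subseteq\mathcal{R}$ be outer measurable. Then $X\cap\bigcap_{n=1}^\infty A_n$ is outer measurable, the limit $\lim_{N\to\infty}M_u\big(X\cap\bigcap_{n=1}^N A_n\big)$ exists in $\mathcal{R}$, and $$\lim_{N\to\infty}M_u\Big(X\cap\bigcap_{n=1}^N A_n\Big)=M_u\Big(X\cap\bigcap_{n=1}^\infty A_n\Big).$$
   Context: $\mathcal{R}$ denotes the Levi-Civita field: functions $x:\mathbb{Q}\to\mathbb{R}$ with left-finite support, with componentwise addition and formal power series multiplication, ordered by $x>0$ iff $x\ne0$ and $x[\min\operatorname{supp}x]>0$; it is a non-Archimedean ordered field extension of $\mathbb{R}$, Cauchy complete in the order topology, in which all limits and series are taken (a series $\sum a_n$ converges iff $a_n\to0$). An interval is a set $[a,b],[a,b),(a,b]$ or $(a,b)$ with $a<b$ in $\mathcal{R}$, of length $l=b-a$. A cover of $A\subseteq\mathcal{R}$ is a sequence of intervals $(S_n)_{n\ge1}$ with $A\subseteq\bigcup_n S_n$ and $\sum_n l(S_n)$ convergent in $\mathcal{R}$. $A$ is called outer measurable if the infimum $\inf\{\sum_n l(S_n): (S_n)\text{ a cover of }A\}$ exists in $\mathcal{R}$; this infimum is then called the outer measure $M_u(A)$. An outer measurable set $A\subseteq\mathcal{R}$ is L-measurable if for every outer measurable $B\subseteq\mathcal{R}$ both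 $A\cap B$ and $A^c\cap B$ (where $A^c=\mathcal{R}\setminus A$) are outer measurable and $M_u(B)=M_u(A\cap B)+M_u(A^c\cap B)$; then its L-measure is $M(A):=M_u(A)$. Finite intersections of L-measurable sets are L-measurable, so $M(\bigcap_{n=1}^N A_n)$ is defined. *)

(* Defs.v *)
From Stdlib Require Import ClassicalEpsilon.
From mathcomp Require Import all_boot all_order all_algebra.
From mathcomp Require Import all_classical all_reals.
From mathcomp Require Import Rstruct.
From Stdlib Require Rdefinitions.
Notation R := Rdefinitions.R.
Import GRing.Theory Num.Theory.

Set Implicit Arguments.
Unset Strict Implicit.
Unset Printing Implicit Defensive.

Local Open Scope ring_scope.
Local Open Scope classical_set_scope.

Definition left_finite (x : rat -> R) : Prop :=
  forall q : rat, finite_set [set r : rat | (r < q)%O /\ x r != 0].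

Record LC := MkLC { lc : rat -> R ; lcP : left_finite lc }.

Lemma left_finite0 : left_finite (fun _ => 0).
Proof.
move=> q; apply: (@sub_finite_set _ _ set0); last exact: finite_set0.
by move=> r [_ /eqP].
Qed.

Lemma left_finite_add (x y : rat -> R) :
  left_finite x -> left_finite y -> left_finite (fun q => x q + y q).
Proof.
move=> hx hy q.
apply: (@sub_finite_set _ _ ([set r | (r < q)%O /\ x r != 0] `|`
                              [set r | (r < q)%O /\ y r != 0])).
  move=> r [rq]; have [x0|x0] := eqVneq (x r) 0.
    by rewrite x0 add0r => y0; right.
  by move=> _; left.
by rewrite finite_setU; split.
Qed.

Lemma left_finite_opp (x : rat -> R) :
  left_finite x -> left_finite (fun q => - x q).
Proof.
move=> hx q; apply: (@sub_finite_set _ _ [set r | (r < q)%O /\ x r != 0]).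
  by move=> r [rq]; rewrite oppr_eq0.
exact: hx.
Qed.

Definition lc0 : LC := MkLC left_finite0.
Definition lc_add (x y : LC) : LC := MkLC (left_finite_add (lcP x) (lcP y)).
Definition lc_opp (x : LC) : LC := MkLC (left_finite_opp (lcP x)).
Definition lc_sub (x y : LC) : LC := lc_add x (lc_opp y).

Definition lc_pos (x : LC) : Prop :=
  exists q : rat, 0 < lc x q /\ forall r : rat, (r < q)%O -> lc x r = 0.
Definition lc_lt (x y : LC) : Prop := lc_pos (lc_sub y x).
Definition lc_le (x y : LC) : Prop := x = y \/ lc_lt x y.

(* Convergence of a sequence in the order topology (open intervals form a base). *)
Definition lc_cvg (u : nat -> LC) (l : LC) : Prop :=
  forall b c : LC, lc_lt b l -> lc_lt l c ->
    exists N : nat, forall n : nat, (N <= n)%N -> lc_lt b (u n) /\ lc_lt (u n) c.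

Fixpoint lc_psum (u : nat -> LC) (N : nat) : LC :=
  match N with
  | O => lc0
  | S N' => lc_add (lc_psum u N') (u N')
  end.

Definition lc_series_to (u : nat -> LC) (l : LC) : Prop := lc_cvg (lc_psum u) l.

(* Intervals [a,b], [a,b), (a,b], (a,b): endpoints plus closedness flags;
   the condition a < b is imposed where intervals are used (in covers). *)
Record interval := Itv { ia : LC ; ib : LC ; lclosed : bool ; rclosed : bool }.

Definition in_itv (I : interval) (x : LC) : Prop :=
  (if lclosed I then lc_le (ia I) x else lc_lt (ia I) x) /\
  (if rclosed I then lc_le x (ib I) else lc_lt x (ib I)).

Definition itv_len (I : interval) : LC := lc_sub (ib I) (ia I).

(* (S n)_n is a cover of A (indices start at 0 instead of 1) *)
Definition is_cover (A : set LC) (S : nat -> interval) : Prop :=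
  (forall n, lc_lt (ia (S n)) (ib (S n))) /\
  A `<=` (\bigcup_n [set x | in_itv (S n) x]) /\
  (exists l, lc_series_to (fun n => itv_len (S n)) l).

Definition cover_sums (A : set LC) : set LC :=
  [set s | exists S, is_cover A S /\ lc_series_to (fun n => itv_len (S n)) s].

Definition is_inf (E : set LC) (m : LC) : Prop :=
  (forall x, E x -> lc_le m x) /\
  (forall m', (forall x, E x -> lc_le m' x) -> lc_le m' m).

Definition outer_measurable (A : set LC) : Prop := exists m, is_inf (cover_sums A) m.

(* outer measure M_u(A) (meaningful when A is outer measurable) *)
Definition Mu (A : set LC) : LC :=
  epsilon (inhabits lc0) (fun m => is_inf (cover_sums A) m).

Definition L_measurable (A : set LC) : Prop :=
  outer_measurable A /\
  forall B : set LC, outer_measurable B ->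
    outer_measurable (A `&` B) /\ outer_measurable (~` A `&` B) /\
    Mu B = lc_add (Mu (A `&` B)) (Mu (~` A `&` B)).

Definition M (A : set LC) : LC := Mu A.

(* Main.v *)
Require Import Defs.
From HB Require Import structures.
From mathcomp Require Import all_boot all_order all_algebra.
From mathcomp Require Import all_classical all_reals.
From Stdlib Require Import ClassicalEpsilon.
From mathcomp Require Import Rstruct.
From mathcomp Require Import ring lra.
From Stdlib Require Cantor.
From Stdlib Require Import Lia.
Import GRing.Theory Num.Theory Order.TTheory.
Set Implicit Arguments.
Unset Strict Implicit.
Unset Printing Implicit Defensive.
Local Open Scope classical_set_scope.
Local Open Scope ring_scope.

Lemma lc_ext (x y : LC) : lc x = lc y -> x = y.
Proof.
case: x => fx px; case: y => fy py /= E; subst fy.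
by rewrite (Prop_irrelevance px py).
Qed.

HB.instance Definition _ := gen_eqMixin LC.
HB.instance Definition _ := gen_choiceMixin LC.

Lemma lc_addA : associative lc_add.
Proof. by move=> x y z; apply: lc_ext; apply: funext => q /=; rewrite addrA. Qed.
Lemma lc_addC : commutative lc_add.
Proof. by move=> x y; apply: lc_ext; apply: funext => q /=; rewrite addrC. Qed.
Lemma lc_add0 : left_id lc0 lc_add.
Proof. by move=> x; apply: lc_ext; apply: funext => q /=; rewrite add0r. Qed.
Lemma lc_addN : left_inverse lc0 lc_opp lc_add.
Proof. by move=> x; apply: lc_ext; apply: funext => q /=; rewrite addNr. Qed.

HB.instance Definition _ := GRing.isZmodule.Build LC lc_addA lc_addC lc_add0 lc_addN.

Lemma lcD (x y : LC) r : lc (x + y) r = lc x r + lc y r. Proof. by []. Qed.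
Lemma lcN (x : LC) r : lc (- x) r = - lc x r. Proof. by []. Qed.
Lemma lcB (x y : LC) r : lc (x - y) r = lc x r - lc y r. Proof. by []. Qed.
Ltac lceq := apply: lc_ext; apply: funext => ?; rewrite /=; ring.

Lemma lc0E r : lc 0 r = 0. Proof. by []. Qed.



Lemma seq_min (s : seq rat) x : x \in s -> exists2 m, m \in s & forall y, y \in s -> (m <= y)%O.
Proof.
elim: s x => [//|a s IH] x _.
case: s IH => [|b s] IH.
  by exists a; rewrite ?inE // => y; rewrite inE => /eqP ->.
have [m ms mmin] := IH b (mem_head _ _).
case: (leP a m) => am.
  exists a; first exact: mem_head.
  by move=> y; rewrite inE => /orP [/eqP ->//|/mmin]; apply: le_trans.
exists m; first by rewrite inE ms orbT.
by move=> y; rewrite inE => /orP [/eqP ->|/mmin //]; apply: ltW.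
Qed.

Lemma min_support (x : LC) : x <> 0 ->
  exists q, lc x q != 0 /\ forall r, (r < q)%O -> lc x r = 0.
Proof.
move=> x0.
have [r xr] : exists r, lc x r != 0.
  apply: contrapT => H; apply: x0; apply: lc_ext; apply: funext => r /=.
  by apply/eqP; apply: contrapT => /negP h; apply: H; exists r.
have := lcP x (r + 1); rewrite finite_seqP => -[s Es].
have rs : r \in s.
  have : [set` s] r by rewrite -Es; split => //; rewrite ltrDl.
  by [].
have [m ms mmin] := seq_min rs.
have : [set` s] m by [].
rewrite -Es => -[mr xm]; exists m; split => // r' r'm.
apply/eqP; apply: contrapT => /negP h.
have : [set` s] r'.
  rewrite -Es; split => //; exact: lt_trans r'm mr.
move=> /mmin; rewrite leNgt r'm //.
Qed.

Lemma pos_dec (x : LC) : x = 0 \/ lc_pos x \/ lc_pos (- x).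
Proof.
have [->|x0] := pselect (x = 0); first by left.
right; have [q [xq xr]] := min_support x0.
case: (ltgtP (lc x q) 0) => h; last by rewrite h eqxx in xq.
  right; exists q; split; first by rewrite lcN oppr_gt0.
  by move=> r rq; rewrite lcN xr // oppr0.
by left; exists q.
Qed.

Lemma pos_add (x y : LC) : lc_pos x -> lc_pos y -> lc_pos (x + y).
Proof.
move=> [q1 [x1 xr]] [q2 [y2 yr]].
case: (ltgtP q1 q2) => h.
- exists q1; split; first by rewrite lcD (yr _ h) addr0.
  by move=> r rq; rewrite lcD xr // yr ?addr0 //; apply: lt_trans rq h.
- exists q2; split; first by rewrite lcD (xr _ h) add0r.
  by move=> r rq; rewrite lcD yr // xr ?addr0 //; apply: lt_trans rq h.
- subst q2; exists q1; split; first by rewrite lcD addr_gt0.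
  by move=> r rq; rewrite lcD xr ?yr ?addr0.
Qed.

Lemma pos_0 : ~ lc_pos 0.
Proof. by move=> [q [h _]]; rewrite lc0E ltxx in h. Qed.

Lemma pos_N (x : LC) : lc_pos x -> ~ lc_pos (- x).
Proof. by move=> h1 h2; apply: pos_0; rewrite -(addrN x); apply: pos_add. Qed.

Notation "x <: y" := (lc_lt x y) (at level 70).
Notation "x <=: y" := (lc_le x y) (at level 70).

Lemma ltE (x y : LC) : (x <: y) = lc_pos (y - x). Proof. by []. Qed.

Lemma lt_trans' (x y z : LC) : x <: y -> y <: z -> x <: z.
Proof.
rewrite !ltE => h1 h2; have := pos_add h2 h1.
by rewrite addrA subrK.
Qed.

Lemma lt_irr (x : LC) : ~ x <: x.
Proof. by rewrite ltE subrr; apply: pos_0. Qed.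

Lemma lt_total (x y : LC) : x <: y \/ x = y \/ y <: x.
Proof.
rewrite !ltE; case: (pos_dec (y - x)) => [/eqP|[h|h]].
- by rewrite subr_eq0 => /eqP ->; right; left.
- by left.
- by right; right; rewrite -opprB.
Qed.

Lemma lt_asym (x y : LC) : x <: y -> y <: x -> False.
Proof. by move=> h1 h2; apply: (lt_irr (lt_trans' h1 h2)). Qed.

Lemma le_trans' (x y z : LC) : x <=: y -> y <=: z -> x <=: z.
Proof.
case=> [->//|h1] [<-|h2]; first by right.
by right; apply: lt_trans' h1 h2.
Qed.

Lemma le_lt_trans' (x y z : LC) : x <=: y -> y <: z -> x <: z.
Proof. by case=> [->//|h1] h2; apply: lt_trans' h1 h2. Qed.

Lemma lt_le_trans' (x y z : LC) : x <: y -> y <=: z -> x <: z.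
Proof. by move=> h1 [<-//|h2]; apply: lt_trans' h1 h2. Qed.

Lemma le_refl' (x : LC) : x <=: x. Proof. by left. Qed.

Lemma le_antisym' (x y : LC) : x <=: y -> y <=: x -> x = y.
Proof. by case=> [//|h1] [//|h2]; case: (lt_asym h1 h2). Qed.

Lemma not_lt_le (x y : LC) : ~ x <: y -> y <=: x.
Proof. by case: (lt_total x y) => [//|[->|h]] _; [left|right]. Qed.

Lemma lt_le_false (x y : LC) : x <: y -> y <=: x -> False.
Proof. by move=> h1 h2; apply: (lt_irr (lt_le_trans' h1 h2)). Qed.

Lemma lt_add2r (z x y : LC) : x <: y -> x + z <: y + z.
Proof. by rewrite !ltE opprD addrACA subrr addr0. Qed.

Lemma le_add2r (z x y : LC) : x <=: y -> x + z <=: y + z.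
Proof. by case=> [->|h]; [left|right; apply: lt_add2r]. Qed.

Lemma le_add (x y x' y' : LC) : x <=: y -> x' <=: y' -> x + x' <=: y + y'.
Proof.
move=> h1 h2; apply: (@le_trans' _ (y + x')); first exact: le_add2r.
by rewrite (addrC y) (addrC y); apply: le_add2r.
Qed.

Lemma lt_le_add (x y x' y' : LC) : x <: y -> x' <=: y' -> x + x' <: y + y'.
Proof.
move=> h1 h2; apply: (@lt_le_trans' _ (y + x')); first exact: lt_add2r.
by rewrite (addrC y) (addrC y); apply: le_add2r.
Qed.

Lemma lt_subr (x y : LC) : x <: y -> 0 <: y - x.
Proof. by rewrite !ltE subr0. Qed.
Lemma subr_lt (x y : LC) : 0 <: y - x -> x <: y.
Proof. by rewrite !ltE subr0. Qed.
Lemma le_subr (x y : LC) : x <=: y -> 0 <=: y - x.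
Proof. by case=> [->|h]; [left; rewrite subrr|right; apply: lt_subr]. Qed.
Lemma subr_le (x y : LC) : 0 <=: y - x -> x <=: y.
Proof.
case=> [/esym/eqP|h]; last by right; apply: subr_lt.
by rewrite subr_eq0 => /eqP ->; left.
Qed.

Definition agree (p : rat) (x y : LC) := forall r, (r <= p)%O -> lc x r = lc y r.
Definition van (p : rat) (x : LC) := forall r, (r <= p)%O -> lc x r = 0.
Definition stab (u : nat -> LC) (l : LC) :=
  forall p, exists N, forall n, (N <= n)%N -> agree p (u n) l.
Definition minpos (q : rat) (z : LC) := 0 < lc z q /\ forall r, (r < q)%O -> lc z r = 0.

Lemma agree_le p q x y : (q <= p)%O -> agree p x y -> agree q x y.
Proof. by move=> qp h r rq; apply: h; apply: le_trans rq qp. Qed.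

Lemma pos_minpos z : lc_pos z -> exists q, minpos q z.
Proof. by []. Qed.

Lemma minpos_agree q z w : minpos q z -> agree q w z -> minpos q w.
Proof.
move=> [zq zr] h; split; first by rewrite h.
by move=> r rq; rewrite h ?zr // ltW.
Qed.

Lemma minpos_pos q z : minpos q z -> lc_pos z.
Proof. by move=> h; exists q. Qed.

Lemma pos_at y r0 : lc_pos y -> lc y r0 != 0 -> (forall r, (r < r0)%O -> lc y r = 0) ->
  0 < lc y r0.
Proof.
move=> [q [yq yr]] y0 hr.
case: (ltgtP q r0) => h.
- by rewrite hr // ltxx in yq.
- by rewrite yr // eqxx in y0.
- by rewrite -h.
Qed.

Lemma pos_ge y m : lc_pos y -> (forall r, (r < m)%O -> lc y r = 0) -> 0 <= lc y m.
Proof.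
move=> hy hr; have [->//|ym] := eqVneq (lc y m) 0.
by apply: ltW; apply: pos_at.
Qed.

Definition dlc_fun (p : rat) : rat -> R := fun r => if r == p then 1 else 0.
Lemma dlc_lf p : left_finite (dlc_fun p).
Proof.
move=> q; apply: (@sub_finite_set _ _ [set p]); last exact: finite_set1.
move=> r [_]; rewrite /dlc_fun /=. have [->//|_] := eqVneq r p. by rewrite eqxx.
Qed.
Definition dlc (p : rat) : LC := MkLC (dlc_lf p).

Lemma dlc_minpos p : minpos p (dlc p).
Proof.
split; first by rewrite /= /dlc_fun eqxx ltr01.
by move=> r rp; rewrite /= /dlc_fun lt_eqF.
Qed.

Lemma dlc_pos p : 0 <: dlc p.
Proof. by rewrite ltE subr0; apply: minpos_pos (dlc_minpos p). Qed.

Lemma small_van x p : 0 <=: x -> x <: dlc p -> forall r, (r < p)%O -> lc x r = 0.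
Proof.
case=> [<-//|]; rewrite ltE subr0 => xp hd.
have [m [xm xr]] := pos_minpos xp.
have mp : ~ (m < p)%O.
  move=> mp; have := pos_ge (m := m) hd.
  rewrite lcB /= /dlc_fun (lt_eqF mp) sub0r oppr_ge0 => H.
  have : lc x m <= 0.
    apply: H => r rm; rewrite ?lcB /= ?/dlc_fun lt_eqF ?xr ?subr0 //; apply: lt_trans rm mp.
  by rewrite leNgt xm.
move=> r rp; apply: xr; apply: lt_le_trans rp _.
by rewrite leNgt; apply/negP.
Qed.

Lemma van_le x y p : 0 <=: x -> x <=: y -> van p y -> van p x.
Proof.
case=> [<-//|]; rewrite ltE subr0 => xp.
have [m [xm xr]] := pos_minpos xp.
move=> hxy hy.
have mp : ~ (m <= p)%O.
  move=> mp; case: hxy => [E|].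
    by move: xm; rewrite E hy // ltxx.
  rewrite ltE => hd.
  have := pos_ge (m := m) hd.
  rewrite lcB hy // sub0r oppr_ge0 => H.
  have : lc x m <= 0.
    apply: H => r rm; rewrite lcB hy ?xr ?subr0 //; apply: ltW; apply: lt_le_trans rm mp.
  by rewrite leNgt xm.
move=> r rp; apply: xr; apply: le_lt_trans rp _.
by rewrite ltNge; apply/negP.
Qed.

Lemma van_lt x z q : van q x -> minpos q z -> x <: z.
Proof.
move=> hx hz; rewrite ltE; apply: (minpos_pos (q := q)).
apply: minpos_agree hz _ => r rq; by rewrite lcB hx // subr0.
Qed.

Lemma vanD p x y : van p x -> van p y -> van p (x + y).
Proof. by move=> hx hy r rp; rewrite lcD hx ?hy ?addr0. Qed.
Lemma vanN p x : van p x -> van p (- x).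
Proof. by move=> hx r rp; rewrite lcN hx ?oppr0. Qed.
Lemma van0 p : van p 0. Proof. by []. Qed.
Lemma van_le_p p q x : (q <= p)%O -> van p x -> van q x.
Proof. by move=> qp h r rq; apply: h; apply: le_trans rq qp. Qed.

Lemma agree_subr p x y : agree p x y <-> van p (x - y).
Proof.
split=> h r rp; first by rewrite lcB h // subrr.
by apply/eqP; rewrite -subr_eq0 -lcB h.
Qed.

Lemma stab_cvg u l : stab u l -> lc_cvg u l.
Proof.
move=> hs b c; rewrite !ltE => hb hc.
have [q1 m1] := pos_minpos hb; have [q2 m2] := pos_minpos hc.
have [N hN] := hs (Order.max q1 q2).
exists N => n /hN hn; split; rewrite ltE.
- apply: (minpos_pos (q := q1)); apply: minpos_agree m1 _ => r rq.
  rewrite !lcB (hn r) //; apply: le_trans rq _; by rewrite le_max lexx.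
- apply: (minpos_pos (q := q2)); apply: minpos_agree m2 _ => r rq.
  rewrite !lcB (hn r) //; apply: le_trans rq _; by rewrite le_max lexx orbT.
Qed.

Lemma cvg_stab u l : lc_cvg u l -> stab u l.
Proof.
move=> hc p.
have e0 : lc_pos (dlc (p + 1)) := minpos_pos (dlc_minpos _).
have hb : lc_lt (l - dlc (p + 1)) l by rewrite ltE opprB addrC subrK.
have hc' : lc_lt l (l + dlc (p + 1)) by rewrite ltE (addrC l) addrK.
have [N hN] := hc _ _ hb hc'.
exists N => n /hN [h1 h2]; apply/agree_subr => r rp.
set x := u n - l.
have hx1 : lc_pos (x + dlc (p + 1)).
  by have -> : x + dlc (p + 1) = u n - (l - dlc (p + 1)) by rewrite /x; lceq.
have hx2 : lc_pos (dlc (p + 1) - x).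
  by have -> : dlc (p + 1) - x = l + dlc (p + 1) - u n by rewrite /x; lceq.
apply/eqP; apply: contrapT => /negP xr.
have x0 : x <> 0 by move=> E; move: xr; rewrite E lc0E eqxx.
have [m [xm xlow]] := min_support x0.
have mr : (m <= r)%O by rewrite leNgt; apply/negP => /xlow; apply/eqP.
have mp : (m < p + 1)%O by apply: le_lt_trans mr _; apply: le_lt_trans rp _; rewrite ltrDl.
have dlow : forall r', (r' <= m)%O -> lc (dlc (p + 1)) r' = 0.
  by move=> r' r'm; rewrite /= /dlc_fun lt_eqF //; apply: le_lt_trans r'm mp.
have P1 : 0 <= lc x m.
  have := pos_ge (m := m) hx1; rewrite lcD dlow // addr0; apply => r' r'm.
  rewrite lcD dlow ?xlow ?addr0 //; exact: ltW.
have P2 : 0 <= - lc x m.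
  have := pos_ge (m := m) hx2; rewrite lcB dlow // sub0r; apply => r' r'm.
  rewrite lcB dlow ?xlow ?subr0 //; exact: ltW.
move: P2; rewrite oppr_ge0 => P2.
have E : lc x m = 0 by apply: le_anti; rewrite P1 P2.
by move: xm; rewrite E eqxx.
Qed.

Lemma cauchy_stab (u : nat -> LC) :
  (forall p, exists N, forall n, (N <= n)%N -> agree p (u n) (u N)) -> exists l, stab u l.
Proof.
move=> hc; have [Nf hNf] := choice _ hc.
have key : forall q r, (r <= q)%O -> lc (u (Nf r)) r = lc (u (Nf q)) r.
  move=> q r rq; set n := maxn (Nf q) (Nf r).
  rewrite -(hNf r n (leq_maxr _ _) r (lexx _)) (hNf q n (leq_maxl _ _) r rq) //.
pose L := fun r => lc (u (Nf r)) r.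
have lf : left_finite L.
  move=> q; apply: (@sub_finite_set _ _ [set r | (r < q)%O /\ lc (u (Nf q)) r != 0]).
    by move=> r [rq]; rewrite /L (key q) // ltW.
  exact: lcP.
exists (MkLC lf) => p; exists (Nf p) => n hn r rp.
by rewrite /= /L (key p) // (hNf p n hn r rp).
Qed.

Lemma stab_le u v a b : stab u a -> stab v b -> (exists N, forall n, (N <= n)%N -> u n <=: v n) ->
  a <=: b.
Proof.
move=> ha hb [N hN]; apply: not_lt_le => hlt.
have [q mq] := pos_minpos hlt.
have [N1 h1] := ha q; have [N2 h2] := hb q.
set n := maxn N (maxn N1 N2).
have hn1 : (N1 <= n)%N by rewrite /n leq_max leq_maxl orbT.
have hn2 : (N2 <= n)%N by rewrite /n leq_max leq_maxr orbT.
have hn : (N <= n)%N by rewrite leq_maxl.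
apply: (lt_le_false _ (hN n hn)); rewrite ltE.
apply: (minpos_pos (q := q)); apply: minpos_agree mq _ => r rq.
by rewrite !lcB (h1 n hn1) // (h2 n hn2).
Qed.

Lemma stab_van u l p : stab u l -> (forall n, van p (u n)) -> van p l.
Proof.
move=> hs hv r rp; have [N hN] := hs p.
by rewrite -(hN N (leqnn _) r rp) hv.
Qed.

Lemma stab_uniq u a b : stab u a -> stab u b -> a = b.
Proof.
move=> ha hb; apply: lc_ext; apply: funext => r.
have [N1 h1] := ha r; have [N2 h2] := hb r.
by rewrite -(h1 (maxn N1 N2) (leq_maxl _ _) r (lexx _)) (h2 (maxn N1 N2) (leq_maxr _ _) r (lexx _)).
Qed.

Notation psum := lc_psum.

Lemma psumS u n : psum u n.+1 = psum u n + u n. Proof. by []. Qed.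

Lemma series_stab u s : lc_series_to u s -> stab (psum u) s.
Proof. exact: cvg_stab. Qed.
Lemma stab_series u s : stab (psum u) s -> lc_series_to u s.
Proof. exact: stab_cvg. Qed.

Lemma psum_mono u m n : (forall k, 0 <=: u k) -> (m <= n)%N -> psum u m <=: psum u n.
Proof.
move=> hu /subnK <-; elim: (n - m)%N => [|k IH]; first by rewrite add0n; left.
apply: le_trans' IH _; rewrite addSn psumS -{1}(addr0 (psum u (k + m))).
rewrite (addrC (psum _ _)) (addrC (psum _ _)); apply: le_add2r; exact: hu.
Qed.

Lemma psum_le_sum u s n : (forall k, 0 <=: u k) -> lc_series_to u s -> psum u n <=: s.
Proof.
move=> hu hs; apply: (@stab_le (fun _ => psum u n) (psum u)).
- by move=> p; exists 0%N => k _ r _.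
- exact: series_stab.
- by exists n => k; apply: psum_mono.
Qed.

Lemma sum_ge0 u s : (forall k, 0 <=: u k) -> lc_series_to u s -> 0 <=: s.
Proof. by move=> hu hs; apply: (psum_le_sum 0 hu hs). Qed.

Lemma term_le_sum u s k : (forall k, 0 <=: u k) -> lc_series_to u s -> u k <=: s.
Proof.
move=> hu hs; apply: le_trans' (psum_le_sum k.+1 hu hs).
rewrite psumS -{1}(add0r (u k)); apply: le_add2r.
exact: (psum_mono hu (leq0n k)).
Qed.

Lemma series_terms_van u s : lc_series_to u s ->
  forall p, exists N, forall n, (N <= n)%N -> van p (u n).
Proof.
move=> /series_stab hs p; have [N hN] := hs p; exists N => n hn r rp.
have := hN n.+1 (leqW hn) r rp; rewrite psumS lcD (hN n hn r rp) => /eqP.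
by rewrite -subr_eq0 addrAC subrr add0r => /eqP.
Qed.

Lemma psum_van u p n : (forall k, van p (u k)) -> van p (psum u n).
Proof. by move=> h; elim: n => [|n IH] //=; apply: vanD. Qed.

Lemma series_of_van u : (forall p, exists N, forall n, (N <= n)%N -> van p (u n)) ->
  exists s, lc_series_to u s.
Proof.
move=> h; have [s hs] : exists s, stab (psum u) s.
  apply: cauchy_stab => p; have [N hN] := h p; exists N => n /subnK <-.
  elim: (n - N)%N => [|k IH] r rp; first by rewrite add0n.
  by rewrite addSn psumS lcD (IH r rp) (hN (k + N)%N (leq_addl _ _) r rp) addr0.
by exists s; apply: stab_series.
Qed.

Lemma itv_len_pos (I : Defs.interval) : lc_lt (ia I) (ib I) -> 0 <: itv_len I.
Proof. by move=> h; rewrite ltE subr0. Qed.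

Lemma cover_sums_ge0 A s : cover_sums A s -> 0 <=: s.
Proof.
move=> [S [[hS _] hs]]; apply: sum_ge0 hs => k; right; exact: itv_len_pos.
Qed.

Lemma cover_sub A B s : A `<=` B -> cover_sums B s -> cover_sums A s.
Proof.
move=> AB [S [[h1 [h2 h3]] hs]]; exists S; split => //; split => //; split => //.
by move=> x /AB /h2.
Qed.

Lemma inf_uniq E m m' : is_inf E m -> is_inf E m' -> m = m'.
Proof. by move=> [h1 h2] [h1' h2']; apply: le_antisym'; [exact: h2' h1 | exact: h2 h1']. Qed.

Lemma Mu_spec A : outer_measurable A -> is_inf (cover_sums A) (Mu A).
Proof. by move=> h; apply: epsilon_spec. Qed.

Lemma Mu_eq A m : is_inf (cover_sums A) m -> Mu A = m.
Proof. move=> h; have hA : outer_measurable A by exists m.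
exact: inf_uniq (Mu_spec hA) h. Qed.

Lemma Mu_ge0 A : outer_measurable A -> 0 <=: Mu A.
Proof. by move=> /Mu_spec [_ h]; apply: h => s /cover_sums_ge0. Qed.

Lemma Mu_lb A s : outer_measurable A -> cover_sums A s -> Mu A <=: s.
Proof. by move=> /Mu_spec [h _]; apply: h. Qed.

Lemma Mu_mono A B : A `<=` B -> outer_measurable A -> outer_measurable B -> Mu A <=: Mu B.
Proof.
move=> AB hA hB; have [_ h] := Mu_spec hB; apply: h => s hs.
apply: Mu_lb hA _; exact: cover_sub hs.
Qed.

Lemma Mu_approx E d : outer_measurable E -> 0 <: d -> exists s, cover_sums E s /\ s <: Mu E + d.
Proof.
move=> hE hd; apply: contrapT => H.
have [_ h] := Mu_spec hE.
have : Mu E + d <=: Mu E.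
    apply: h => s hs; apply: not_lt_le => hlt; apply: H; exists s; split => //.
move=> h'; apply: (lt_le_false _ h').
by rewrite -{1}(addr0 (Mu E)) (addrC (Mu E)) (addrC (Mu E)); apply: lt_add2r.
Qed.



Definition interl (S S' : nat -> Defs.interval) k := if odd k then S' k./2 else S k./2.

Lemma interl_even S S' k : interl S S' k.*2 = S k.
Proof. by rewrite /interl odd_double doubleK. Qed.
Lemma interl_odd S S' k : interl S S' k.*2.+1 = S' k.
Proof. by rewrite /interl /= odd_double /= uphalf_double. Qed.

Lemma psum_interl (S S' : nat -> Defs.interval) k :
  psum (fun n => itv_len (interl S S' n)) k.*2 =
  psum (fun n => itv_len (S n)) k + psum (fun n => itv_len (S' n)) k /\
  psum (fun n => itv_len (interl S S' n)) k.*2.+1 =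
  psum (fun n => itv_len (S n)) k + psum (fun n => itv_len (S' n)) k + itv_len (S k).
Proof.
elim: k => [|k [IH1 IH2]].
  split; first by rewrite /= addr0.
  rewrite /= /interl /=; lceq.
have E1 : psum (fun n => itv_len (interl S S' n)) k.+1.*2 =
  psum (fun n => itv_len (S n)) k.+1 + psum (fun n => itv_len (S' n)) k.+1.
  rewrite doubleS (psumS (fun n => itv_len (interl S S' n)) (k.*2.+1)) IH2 interl_odd.
  rewrite (psumS (fun n => itv_len (S n))) (psumS (fun n => itv_len (S' n))); lceq.
split => //; rewrite (psumS (fun n => itv_len (interl S S' n))) E1 interl_even //.
Qed.

Lemma cover_join A B C s t : cover_sums A s -> cover_sums B t -> C `<=` A `|` B ->
  cover_sums C (s + t).
Proof.
move=> [S [[hS1 [hS2 _]] hs]] [S' [[hS1' [hS2' _]] ht]] hC.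
have hT : lc_series_to (fun n => itv_len (interl S S' n)) (s + t).
  apply: stab_series => p.
  have [N1 h1] := series_stab hs p; have [N2 h2] := series_stab ht p.
  have [N3 h3] := series_terms_van hs p.
  set K := maxn N1 (maxn N2 N3).
  exists K.*2 => n hn.
  have hk : (K <= n./2)%N by rewrite -(doubleK K); apply: half_leq.
  have k1 : (N1 <= n./2)%N by apply: leq_trans hk; rewrite leq_maxl.
  have k2 : (N2 <= n./2)%N by apply: leq_trans hk; rewrite /K leq_max leq_maxl orbT.
  have k3 : (N3 <= n./2)%N by apply: leq_trans hk; rewrite /K leq_max leq_max leqnn !orbT.
  have En := odd_double_half n.
  have [P1 P2] := psum_interl S S' n./2.
  move=> r rp.
  case: (odd n) En => /= En.
  + rewrite -En add1n P2 lcD (h3 _ k3 r rp) lcD (h1 _ k1 r rp) (h2 _ k2 r rp) addr0 //.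
  + rewrite -En add0n P1 lcD (h1 _ k1 r rp) (h2 _ k2 r rp) //.
exists (interl S S'); split => //; split.
  by move=> n; rewrite /interl; case: (odd n).
split; last by exists (s + t).
move=> x /hC [/hS2 [n _ hn]|/hS2' [n _ hn]].
  by exists n.*2 => //; rewrite interl_even.
by exists n.*2.+1 => //; rewrite interl_odd.
Qed.

Lemma half_pos d : 0 <: d -> exists e, 0 <: e /\ e + e <: d.
Proof.
rewrite ltE subr0 => hd; have [q mq] := pos_minpos hd.
exists (dlc (q + 1)); split; first exact: dlc_pos.
apply: (van_lt (q := q)) => //.
move=> r rq; rewrite lcD /= /dlc_fun.
have -> : (r == q + 1) = false by apply: lt_eqF; apply: le_lt_trans rq _; rewrite ltrDl.
by rewrite addr0.
Qed.

Lemma meas_inter A1 A2 : L_measurable A1 -> L_measurable A2 -> L_measurable (A1 `&` A2).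
Proof.
move=> [o1 h1] [o2 h2].
split; first by have [o _] := h2 A1 o1; rewrite setIC.
move=> E oE; have [oE1 [oE2 eE]] := h1 E oE.
have [oE11 [oE12 eE1]] := h2 (A1 `&` E) oE1.
have EQ : A1 `&` A2 `&` E = A2 `&` (A1 `&` E).
  by apply/seteqP; split => x /=; tauto.
rewrite EQ; set E11 := A2 `&` (A1 `&` E); set E12 := ~` A2 `&` (A1 `&` E).
set E2 := ~` A1 `&` E; set F := ~` (A1 `&` A2) `&` E.
have hinf : is_inf (cover_sums F) (Mu E12 + Mu E2).
  split.
  - move=> s hs; apply: not_lt_le => hlt.
    have hd : 0 <: Mu E12 + Mu E2 - s by apply: lt_subr.
    have [t [ht tlt]] := Mu_approx oE11 hd.
    have H1 : Mu E <=: s + t.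
      have := @Mu_lb E (s + t) oE; apply. apply: cover_join hs ht _ => x Ex.
      have [a1|na1] := pselect (A1 x); have [a2|na2] := pselect (A2 x).
      + by right.
      + by left; split => // -[].
      + by left; split => // -[].
      + by left; split => // -[].
    apply: (lt_le_false _ H1).
    have -> : Mu E = s + (Mu E11 + (Mu E12 + Mu E2 - s)) by rewrite eE eE1; lceq.
    by rewrite (addrC s) (addrC s); apply: lt_add2r.
  - move=> m' hm'; apply: not_lt_le => hlt.
    have [e [e0 ee]] := half_pos (lt_subr hlt).
    have [t1 [ht1 t1lt]] := Mu_approx oE12 e0.
    have [t2 [ht2 t2lt]] := Mu_approx oE2 e0.
    have H1 : m' <=: t1 + t2.
      apply: hm'; apply: cover_join ht1 ht2 _ => x [nA Ex].
      have [a1|na1] := pselect (A1 x).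
      + by left; split => // a2; apply: nA.
      + by right.
    apply: (lt_le_false _ H1).
    apply: (@lt_trans' _ (Mu E12 + e + (Mu E2 + e))); first exact: lt_le_add t1lt (or_intror t2lt).
    have -> : Mu E12 + e + (Mu E2 + e) = e + e + (Mu E12 + Mu E2) by lceq.
    have -> : m' = m' - (Mu E12 + Mu E2) + (Mu E12 + Mu E2) by lceq.
    exact: lt_add2r.
split; first exact: oE11.
split; first by exists (Mu E12 + Mu E2).
by rewrite (Mu_eq hinf) eE eE1; lceq.
Qed.

Lemma cantor_far M0 J : exists K, forall k, (K <= k)%N ->
  (M0 <= (Cantor.of_nat k).1)%N \/ (J <= (Cantor.of_nat k).2)%N.
Proof.
exists (J + (J + M0) * (J + M0).+1)%N => k hk.
have E := Cantor.cancel_to_of k.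
case: (Cantor.of_nat k) E => M j E.
have := Cantor.to_nat_spec M j; rewrite E => hs.
case: (leqP M0 M) => h1; first by left.
case: (leqP J j) => h2; first by right.
exfalso.
have h1' : (M < M0)%coq_nat by apply/ssrnat.ltP.
have h2' : (j < J)%coq_nat by apply/ssrnat.ltP.
have hk' : (J + (J + M0) * (J + M0).+1 <= k)%coq_nat by apply/ssrnat.leP.
rewrite -!plusE -!multE in hk'.
nia.
Qed.

Lemma cover_bigjoin (F : nat -> nat -> Defs.interval) (C : set LC) (p0 : rat) :
  (forall M j, lc_lt (ia (F M j)) (ib (F M j))) ->
  (forall M, exists s, lc_series_to (fun j => itv_len (F M j)) s) ->
  (forall p, exists M0, forall M, (M0 <= M)%N -> forall j, van p (itv_len (F M j))) ->
  (forall x, C x -> exists M j, Defs.in_itv (F M j) x) ->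
  (forall M j, van p0 (itv_len (F M j))) ->
  exists c, cover_sums C c /\ van p0 c.
Proof.
move=> hpos hser hvan hcov hv0.
pose T k := F (Cantor.of_nat k).1 (Cantor.of_nat k).2.
have tv : forall p, exists K, forall k, (K <= k)%N -> van p (itv_len (T k)).
  move=> p; have [M0 hM0] := hvan p.
  have [J hJ] : exists J, forall M, (M < M0)%N -> forall j, (J <= j)%N -> van p (itv_len (F M j)).
    clear hM0; elim: M0 => [|M0 [J hJ]]; first by exists 0%N.
    have [s hs] := hser M0; have [J' hJ'] := series_terms_van hs p.
    exists (maxn J J') => M; rewrite ltnS leq_eqVlt => /orP [/eqP ->|hM] j hj.
      apply: hJ'; apply: leq_trans hj; exact: leq_maxr.
    apply: hJ => //; apply: leq_trans hj; exact: leq_maxl.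
  have [K hK] := cantor_far M0 J.
  exists K => k /hK [h|h]; rewrite /T.
    exact: hM0.
  case: (leqP M0 (Cantor.of_nat k).1) => h'; first exact: hM0.
  exact: hJ.
have [c hc] := series_of_van tv.
exists c; split.
  exists T; split => //; split; first by move=> k; apply: hpos.
  split; last by exists c.
  move=> x /hcov [M [j hj]]; exists (Cantor.to_nat (M, j)) => //.
  by rewrite /T Cantor.cancel_of_to.
apply: stab_van (series_stab hc) _ => n; apply: psum_van => k; exact: hv0.
Qed.


Section Main.
Variable A : nat -> set LC.
Hypothesis hA : forall n, L_measurable (A n).
Variable X : set LC.
Hypothesis oX : outer_measurable X.

Let B N := [set x | forall n, (n <= N)%N -> A n x].
Let Binf := [set x | forall n, A n x].

Lemma LB N : L_measurable (B N).
Proof.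
elim: N => [|N IH].
  have -> : B 0 = A 0.
    apply/seteqP; split => x /=; first by apply.
    by move=> h n; rewrite leqn0 => /eqP ->.
  exact: hA.
have -> : B N.+1 = B N `&` A N.+1.
  apply/seteqP; split => x /=.
    by move=> h; split; [move=> n hn; apply: h; apply: leqW|apply: h].
  move=> [h1 h2] n; rewrite leq_eqVlt => /orP [/eqP ->//|]; rewrite ltnS; exact: h1.
exact: meas_inter.
Qed.

Let m N := Mu (B N).
Let a N := Mu (X `&` B N).

Lemma oXB N : outer_measurable (X `&` B N).
Proof. by have [_ h] := LB N; have [o _] := h X oX; rewrite setIC. Qed.

Lemma BS N : B N.+1 `<=` B N.
Proof. by move=> x h n hn; apply: h; apply: leqW. Qed.

Lemma mstep N : outer_measurable (~` B N.+1 `&` B N) /\ m N = m N.+1 + Mu (~` B N.+1 `&` B N).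
Proof.
have [[oB _] h] := LB N.+1; have oBN := (LB N).1.
have [_ [o2 e]] := h (B N) oBN.
have E : B N.+1 `&` B N = B N.+1 by apply/seteqP; split => x; [case|move=> hx; split => //; apply: BS].
by split => //; rewrite /m e E.
Qed.

Lemma astep N : 0 <=: a N - a N.+1 /\ a N - a N.+1 <=: m N - m N.+1.
Proof.
have [_ h] := LB N.+1.
have [_ [o2 e]] := h _ (oXB N).
have E : B N.+1 `&` (X `&` B N) = X `&` B N.+1.
  by apply/seteqP; split => x; [case=> h1 [h2 _]|case=> h1 h2; split => //; split => //; apply: BS].
have ea : a N - a N.+1 = Mu (~` B N.+1 `&` (X `&` B N)) by rewrite /a e E; lceq.
have [oD em] := mstep N.
have emm : m N - m N.+1 = Mu (~` B N.+1 `&` B N) by rewrite em; lceq.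
rewrite ea emm; split; first exact: Mu_ge0.
apply: Mu_mono => //; by move=> x [h1 [h2 h3]].
Qed.

Lemma astep_gen N k : 0 <=: a N - a (k + N) /\ a N - a (k + N) <=: m N - m (k + N).
Proof.
elim: k => [|k [IH1 IH2]]; first by rewrite add0n !subrr; split; left.
have [S1 S2] := astep (k + N).
have -> : a N - a (k.+1 + N) = (a N - a (k + N)) + (a (k + N) - a (k + N).+1) by rewrite addSn; lceq.
have -> : m N - m (k.+1 + N) = (m N - m (k + N)) + (m (k + N) - m (k + N).+1) by rewrite addSn; lceq.
split; last exact: le_add.
by rewrite -(addr0 0); apply: le_add.
Qed.


Hypothesis hl : exists l, lc_cvg (fun N => M (B N)) l.

Lemma a_stab : exists aL, stab a aL.
Proof.
have [l hl'] := hl; have hs : stab m l := cvg_stab hl'.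
apply: cauchy_stab => p; have [N0 hN0] := hs p; exists N0 => n hn.
apply/agree_subr.
have [h1 h2] := astep_gen N0 (n - N0).
rewrite subnK // in h1 h2.
have hv : van p (m N0 - m n).
  by move=> r rp; rewrite lcB (hN0 N0 (leqnn _) r rp) (hN0 n hn r rp) subrr.
have := vanN (van_le h1 h2 hv).
by rewrite opprB.
Qed.

Lemma aL_le aL N : stab a aL -> aL <=: a N.
Proof.
move=> ha; apply: (@stab_le a (fun _ => a N)) => //.
  by move=> p; exists 0%N => n _ r _.
exists N => n hn; have [h1 _] := astep_gen N (n - N).
by rewrite subnK // in h1; apply: subr_le.
Qed.

Lemma find_D N x : B N x -> ~ Binf x -> exists M', B (N + M') x /\ ~ B (N + M').+1 x.
Proof.
move=> hB hnot.
have [n hn] : exists n, ~ A n x.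
  by apply: contrapT => H; apply: hnot => n; apply: contrapT => H'; apply: H; exists n.
have hk : ~ B (N + n) x by move=> H; apply: hn; apply: H; apply: leq_addl.
elim: n {hn} hk => [|k IH] hk; first by rewrite addn0 in hk.
have [hb|hb] := pselect (B (N + k) x).
  by exists k; split => //; rewrite -addnS.
exact: IH.
Qed.

Lemma main_inf aL : stab a aL -> is_inf (cover_sums (X `&` Binf)) aL.
Proof.
move=> ha; have [l hl'] := hl; have hsm : stab m l := cvg_stab hl'.
split; last first.
  move=> m' hm'; apply: (@stab_le (fun _ => m') a) => //.
    by move=> p; exists 0%N => n _ r _.
  exists 0%N => N _; have [_ h] := Mu_spec (oXB N); apply: h => s hs'.
  apply: hm'; apply: cover_sub hs' => x [h1 h2]; split => // n _; exact: h2.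
move=> s hs; apply: not_lt_le => hlt.
have [q0 mq] := pos_minpos hlt.
have [N hN] := hsm q0.
pose D K := ~` B K.+1 `&` B K.
pose pM (M' : nat) : rat := q0 + 1 + M'%:R.
have hF : forall M', exists Ss : (nat -> Defs.interval) * LC,
    is_cover (D (N + M')) Ss.1 /\ lc_series_to (fun j => itv_len (Ss.1 j)) Ss.2 /\
    Ss.2 <: Mu (D (N + M')) + dlc (pM M').
  move=> M'; have [oD _] := mstep (N + M').
  have [t [[S [hS1 hS2]] tlt]] := Mu_approx oD (dlc_pos (pM M')).
  by exists (S, t).
have [G hG] := choice _ hF.
have Dvan : forall p K, (forall n, (K <= n)%N -> agree p (m n) l) -> van p (Mu (D K)).
  move=> p K hK; have [_ e] := mstep K.
  have -> : Mu (D K) = m K - m K.+1 by rewrite e; lceq.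
  by move=> r rp; rewrite lcB (hK K (leqnn _) r rp) (hK K.+1 (leqnSn _) r rp) subrr.
have sMvan : forall p M', van p (Mu (D (N + M'))) -> (p < pM M')%O -> van p (G M').2.
  move=> p M' hD hp; have [hc [hser hlt']] := hG M'.
  have hD0 : outer_measurable (D (N + M')) := (mstep (N + M')).1.
  have h0 : 0 <=: (G M').2 - Mu (D (N + M')).
    apply: le_subr; apply: Mu_lb hD0 _; by exists (G M').1.
  have h1 : (G M').2 - Mu (D (N + M')) <: dlc (pM M').
    have := lt_add2r (- Mu (D (N + M'))) hlt'.
    by have -> : Mu (D (N + M')) + dlc (pM M') - Mu (D (N + M')) = dlc (pM M') by lceq.
  have hv := small_van h0 h1.
  have -> : (G M').2 = Mu (D (N + M')) + ((G M').2 - Mu (D (N + M'))) by lceq.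
  apply: vanD => // r rp; apply: hv; apply: le_lt_trans rp hp.
have lenvan : forall p M' j, van p (G M').2 -> van p (itv_len ((G M').1 j)).
  move=> p M' j hv; have [[hp _] [hser _]] := hG M'.
  have hpos : forall k, 0 <=: itv_len ((G M').1 k) by move=> k; right; apply: itv_len_pos.
  apply: van_le (hpos j) (term_le_sum j hpos hser) hv.
have hq0 : forall M', (q0 < pM M')%O.
  move=> M'; rewrite /pM -addrA ltrDl; apply: lt_le_trans (ltr01) _.
  by rewrite lerDl ler0n.
pose C := [set x | (X `&` B N) x /\ ~ Binf x].
have [c [hc cvan]] : exists c, cover_sums C c /\ van q0 c.
  apply: (@cover_bigjoin (fun M' j => (G M').1 j)).
  - by move=> M' j; have [[hp _] _] := hG M'; apply: hp.
  - by move=> M'; exists (G M').2; have [_ [h _]] := hG M'.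
  - move=> p; have [Np hNp] := hsm p.
    exists (maxn Np (Num.Def.trunc (p - q0)).+1) => M' hM' j.
    apply: lenvan; apply: sMvan.
      apply: Dvan => n hn; apply: hNp; apply: leq_trans hn.
      apply: leq_trans (leq_addl N M'); apply: leq_trans hM'; exact: leq_maxl.
    rewrite /pM; have := truncnS_gt (p - q0).
    have hM1 : ((Num.Def.trunc (p - q0)).+1 <= M')%N by apply: leq_trans hM'; exact: leq_maxr.
    move=> h; have hn : ((Num.Def.trunc (p - q0)).+1%:R : rat) <= M'%:R by rewrite ler_nat.
    change (p < q0 + 1 + M'%:R); lra.
  - move=> x [[hX hB] hnot]; have [M' [h1 h2]] := find_D hB hnot.
    have [[_ [hcov _]] _] := hG M'.
    have [j _ hj] := hcov x (conj h2 h1).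
    by exists M', j.
  - move=> M' j; apply: lenvan; apply: sMvan => //.
    apply: Dvan => n hn; apply: hN; apply: leq_trans hn; exact: leq_addr.
have hj : cover_sums (X `&` B N) (s + c).
  apply: cover_join hs hc _ => x [hX hB].
  have [hb|hb] := pselect (Binf x); [by left | by right].
have H1 : a N <=: s + c := Mu_lb (oXB N) hj.
have H2 : aL <=: a N := aL_le N ha.
have H3 : c <: aL - s := van_lt cvan mq.
have H4 : s + c <: aL.
  have := lt_add2r s H3; rewrite (addrC c).
  by have -> : aL - s + s = aL by lceq.
exact: lt_le_false H4 (le_trans' H2 H1).
Qed.

Lemma main_res : outer_measurable (X `&` Binf) /\ lc_cvg a (Mu (X `&` Binf)).
Proof.
have [aL ha] := a_stab; have hi := main_inf ha.
split; first by exists aL.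
by rewrite (Mu_eq hi); apply: stab_cvg.
Qed.

End Main.

Local Close Scope ring_scope.

Theorem lemma4p2 (A : nat -> set LC) :
  (forall n, L_measurable (A n)) ->
  (exists l : LC, lc_cvg (fun N => M [set x | forall n, (n <= N)%N -> A n x]) l) ->
  forall X : set LC, outer_measurable X ->
    outer_measurable (X `&` [set x | forall n, A n x]) /\
    lc_cvg (fun N => Mu (X `&` [set x | forall n, (n <= N)%N -> A n x]))
           (Mu (X `&` [set x | forall n, A n x])).
Proof. by move=> hA hl X oX; apply: main_res. Qed.
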